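(* Let $R$ be a $*$-ring with unity. Define a relation $\leq$ on $R$ by: $a\leq b$ if and only if there exists $x\in R$ such that $a=xa=xb=ax^*=bx^*$. Then $\leq$ is a partial order on $R$.
   Context: A $*$-ring is an associative ring with an involution $*$, i.e. a map satisfying $(a+b)^*=a^*+b^*$, $(ab)^*=b^*a^*$, $(a^* )^*=a$ for all $a,b$. *)

(* Defs.v *)
From mathcomp Require Import all_boot all_algebra.
Set Implicit Arguments. Unset Strict Implicit. Unset Printing Implicit Defensive.
Import GRing.Theory.
Local Open Scope ring_scope.

Definition is_involution (R : pzRingType) (s : R -> R) : Prop :=
  [/\ forall a b : R, s (a + b) = s a + s b,
      forall a b : R, s (a * b) = s b * s a
    & forall a : R, s (s a) = a].

Definition star_le (R : pzRingType) (s : R -> R) (a b : R) : Prop :=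
  exists x : R, [/\ a = x * a, a = x * b, a = a * s x & a = b * s x].

Definition is_partial_order (T : Type) (le : T -> T -> Prop) : Prop :=
  [/\ forall a, le a a,
      forall a b, le a b -> le b a -> a = b
    & forall a b c, le a b -> le b c -> le a c].

(* Main.v *)
Require Import Defs.
From mathcomp Require Import all_boot all_algebra.
Import GRing.Theory.
Local Open Scope ring_scope.

Theorem mainTheorem1 (R : pzRingType) (s : R -> R) :
  is_involution s -> is_partial_order (star_le s).
Proof.
case=> sD sM sK.
have s1 : s 1 = 1.
  have H : forall a : R, a = a * s 1.
    move=> a; have := sM 1 (s a); by rewrite mul1r !sK.
  by have := H 1; rewrite mul1r => /esym.
split.
- by move=> a; exists 1; rewrite s1 mul1r mulr1.
- move=> a b [x [h1 h2 h3 h4]] [y [k1 k2 k3 k4]].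
  by rewrite h2 {1}k3 mulrA -h2 -k4.
- move=> a b c [x [h1 h2 h3 h4]] [y [k1 k2 k3 k4]].
  have ya : y * a = a by rewrite {1}h4 mulrA -k1 -h4.
  have asy : a * s y = a by rewrite {1}h2 -mulrA -k3 -h2.
  exists (x * y); split.
  + by rewrite -mulrA ya -h1.
  + by rewrite -mulrA -k2 -h2.
  + by rewrite sM mulrA asy -h3.
  + by rewrite sM mulrA -k4 -h4.
Qed.
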